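(* Let $V$ be a vertex operator algebra, $n\in\mathbb{N}$, $u\in V$ homogeneous, $v\in V$, $t\in\mathbb{Z}_+$ and $i_1,\dots,i_t\in\mathbb{N}$. Put $p_0=0$, $p_s=\sum_{j=1}^s i_j$ for $1\le s\le t$, and $r=\sum_{j=1}^t(\mathrm{wt}\,u+j-1)i_j$. For $k_1,\dots,k_{p_t}\in\mathbb{N}$ set \[ P_{i_1,\dots,i_t}(k_1,\dots,k_{p_t})=\prod_{s=1}^t\prod_{l=1}^{i_s}\binom{k_{l+p_{s-1}}+s-1}{s-1}u_{-k_{l+p_{s-1}}-s}. \] Then \[ u_{-t}^{i_t}\cdots u_{-1}^{i_1}\mathbf{1}*_nv=\sum_{m=0}^n\sum_{j=-m}^n(-1)^m\binom{m+n}{n}\binom{n+r}{j+m}\sum_{\substack{k_1,\dots,k_{p_t}\in\mathbb{N}\\k_1+\cdots+k_{p_t}=n-j}}{}^{\circ}_{\circ}P_{i_1,\dots,i_t}(k_1,\dots,k_{p_t}){}^{\circ}_{\circ}v+g_{i_1,\dots,i_t}(v), \] where $g_{i_1,\dots,i_t}(v)$ is a linear combination of elements ${}^{\circ}_{\circ}u_{q_1}\cdots u_{q_{p_t}}{}^{\circ}_{\circ}v$ with $q_1,\dots,q_{p_t}\in\mathbb{Z}$ and at least one $q_i\ge0$. Furthermore, if $n+r\ge0$ and $r<0$, the range of the sum over $j$ may be taken to be $-n\le j\le n+r$.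
   Context: $Y(v,x)=\sum v_kx^{-k-1}$; $\mathrm{wt}$ is the $L(0)$-eigenvalue. The level $n$ product is $a*_nb=\sum_{m=0}^n(-1)^m\binom{m+n}{n}\mathrm{Res}_x(1+x)^{\mathrm{wt}\,a+n}Y(a,x)b\,x^{-n-m-1}$ for homogeneous $a$ (the element $u_{-t}^{i_t}\cdots u_{-1}^{i_1}\mathbf{1}$ has weight $r$). Normal ordering ${}^{\circ}_{\circ}\cdots{}^{\circ}_{\circ}$ of a product of modes moves all modes $u_q$ with $q\ge0$ to the right of those with $q<0$ (for two modes, ${}^{\circ}_{\circ}u_ju_k{}^{\circ}_{\circ}=u_ju_k$ if $j<0$ and $=u_ku_j$ if $j\ge0$). Binomials $\binom{p}{q}=p(p-1)\cdots(p-q+1)/q!$ for $q\in\mathbb{N}$, $0$ for $q<0$. *)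

(* Defs.v *)
From HB Require Import structures.
From mathcomp Require Import all_boot all_algebra.
From mathcomp Require Import reals Rstruct.
From mathcomp.real_closed Require Import complex.
From Stdlib Require Import ClassicalEpsilon.
Set Implicit Arguments. Unset Strict Implicit. Unset Printing Implicit Defensive.
Import GRing.Theory Num.Theory.
Local Open Scope ring_scope.

Notation CC := (Rdefinitions.R[i]).

(* Generalized binomial coefficient  binom(p, i) = p(p-1)...(p-i+1)/i!
   for p : int, i : nat.  For p = -(a+1) it equals (-1)^i C(a+i, i). *)
Definition gbinom (p : int) (i : nat) : int :=
  match p with
  | Posz a => ('C(a, i))%:Z
  | Negz a => (-1) ^+ i * ('C(a + i, i))%:Z
  end.

Definition binomZ (p q : int) : int :=
  match q with Posz b => gbinom p b | Negz _ => 0 end.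

(* Sum of a sequence with only finitely many nonzero terms
   (f M = 0 for all M large); 0 by convention otherwise. *)
Definition tsum {V : zmodType} (f : nat -> V) : V :=
  match excluded_middle_informative
          (exists N : nat, forall M : nat, (N <= M)%N -> f M = 0) with
  | left H => \sum_(i < proj1_sig (constructive_indefinite_description _ H)) f i
  | right _ => 0
  end.

(* Sum of F j over integers lo <= j <= hi (0 if hi < lo). *)
Definition isum {V : zmodType} (lo hi : int) (F : int -> V) : V :=
  \sum_(x < absz (hi - lo + 1) | lo + x%:Z <= hi) F (lo + x%:Z).

Section VOA.
Variables (K : fieldType) (V : lmodType K).
(* Y u n v  =  u_n v,  where  Y(u,x) = sum_n u_n x^{-n-1}. *)
Variable Y : V -> int -> V -> V.
Variables (one omega : V) (c : K).

(* Virasoro operators: Y(omega, x) = sum_n L(n) x^{-n-2}. *)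
Definition Lop (n : int) : V -> V := Y omega (n + 1).

Definition homog (k : int) (v : V) : Prop := Lop 0 v = k%:~R *: v.

Definition in_span (s : seq V) (v : V) : Prop :=
  exists a : nat -> K, v = \sum_(j < size s) a j *: s`_j.

(* Vertex operator algebra (V, Y, 1, omega) of central charge c
   (Frenkel-Lepowsky-Meurman / Lepowsky-Li), Jacobi identity in its
   equivalent component (Borcherds) form. *)
Record is_VOA : Prop := {
  Y_linear_l : forall (a : K) u u' n v, Y (a *: u + u') n v = a *: Y u n v + Y u' n v;
  Y_linear_r : forall (a : K) u n v v', Y u n (a *: v + v') = a *: Y u n v + Y u n v';
  Y_trunc : forall u v, exists N : int, forall n : int, N <= n -> Y u n v = 0;
  Y_vacuum : forall n v, Y one n v = if n == -1 then v else 0;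
  Y_creation : forall u, Y u (-1) one = u /\ (forall n : int, 0 <= n -> Y u n one = 0);
  Y_Borcherds : forall (u v w : V) (p q r : int),
    tsum (fun i => Y (Y u (r + i%:Z) v) (p + q - i%:Z) w *~ gbinom p i)
    = tsum (fun i => Y u (p + r - i%:Z) (Y v (q + i%:Z) w) *~ ((-1) ^+ i * gbinom r i))
      - tsum (fun i => Y v (q + r - i%:Z) (Y u (p + i%:Z) w)
                         *~ ((-1) ^+ i * gbinom r i * (-1) ^+ (absz r)));
  Virasoro : forall (m n : int) v,
    Lop m (Lop n v) - Lop n (Lop m v)
    = Lop (m + n) v *~ (m - n)
      + (if m + n == 0 then ((m ^+ 3 - m)%:~R / 12%:R * c) *: v else 0);
  L_derivative : forall u n v, Y (Lop (-1) u) n v = Y u (n - 1) v *~ (- n);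
  grading : forall v, exists s : seq (int * V),
    (forall x, x \in s -> homog x.1 x.2) /\ v = \sum_(x <- s) x.2;
  grading_findim : forall k : int, exists s : seq V, forall v, homog k v -> in_span s v;
  grading_bounded : exists N : int, forall k v, k < N -> homog k v -> v = 0;
  omega_weight : homog 2 omega
}.

(* The level n product  a *_n b  of a (homogeneous of weight wa) with b:
   sum_{m=0}^n (-1)^m C(m+n,n) Res_x (1+x)^{wa+n} Y(a,x) b x^{-n-m-1},
   where the residue equals sum_{i>=0} binom(wa+n,i) a_{i-n-m-1} b. *)
Definition star (a : V) (wa : int) (n : nat) (b : V) : V :=
  \sum_(m < n.+1)
    (tsum (fun i => Y a (i%:Z - n%:Z - m%:Z - 1) b *~ gbinom (wa + n%:Z) i)
       *~ ((-1) ^+ m * ('C(m + n, n))%:Z)).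

Fixpoint nord (u : V) (qs : seq int) (v : V) : V :=
  match qs with
  | [::] => v
  | q :: qs' => if q < 0 then Y u q (nord u qs' v) else nord u qs' (Y u q v)
  end.

Section Monomial.
Variables (u : V) (i : nat -> nat).

Fixpoint elt (s : nat) : V :=
  match s with
  | 0 => one
  | s'.+1 => iter (i s'.+1) (Y u (- (s'.+1)%:Z)) (elt s')
  end.

Definition psum (s : nat) : nat := \sum_(1 <= j < s.+1) i j.

Definition wtr (wtu : int) (t : nat) : int :=
  \sum_(1 <= j < t.+1) (wtu + j%:Z - 1) * (i j)%:Z.

(* The factors of P_{i_1..i_t}, as pairs (index l + p_{s-1}, s), listed in
   operator order: the s = t block leftmost, ..., the s = 1 block rightmost,
   matching u_{-t}^{i_t} ... u_{-1}^{i_1}. *)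
Definition blocks (t : nat) : seq (nat * nat) :=
  flatten [seq [seq (l + psum s.-1, s)%N | l <- iota 1 (i s)] | s <- rev (iota 1 t)].

(* k_a for a 1-based index a *)
Definition kat (pt N : nat) (k : {ffun 'I_pt -> 'I_N}) (a : nat) : nat :=
  if @insub nat (fun x => x < pt)%N _ a.-1 is Some a' then val (k a') else 0%N.

Definition Pterm (t N : nat) (k : {ffun 'I_(psum t) -> 'I_N}) (v : V) : V :=
  nord u [seq - (kat k x.1)%:Z - x.2%:Z | x <- blocks t] v
    *~ (\prod_(x <- blocks t) 'C(kat k x.1 + x.2 - 1, x.2 - 1))%:Z.

(* sum_{m=0}^n sum_{j = lo m}^{hi} (-1)^m C(m+n,n) binom(n+r, j+m)
     sum_{k_1+...+k_{p_t} = n-j} :P(k): v   (valid for hi <= n) *)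
Definition mainsum (wtu : int) (t n : nat) (lo : nat -> int) (hi : int) (v : V) : V :=
  \sum_(m < n.+1) isum (lo m) hi (fun j =>
    (\sum_(k : {ffun 'I_(psum t) -> 'I_(absz (n%:Z - j)).+1}
                 | (\sum_(x : 'I_(psum t)) val (k x) == absz (n%:Z - j))%N)
           Pterm k v)
      *~ ((-1) ^+ m * ('C(m + n, n))%:Z * binomZ (n%:Z + wtr wtu t) (j + m%:Z))).

End Monomial.

Definition gset (u : V) (p : nat) (v : V) (y : V) : Prop :=
  exists qs : seq int, size qs = p /\ has (fun q => 0 <= q) qs /\ y = nord u qs v.

Definition lspan (S : V -> Prop) (x : V) : Prop :=
  exists s : seq (K * V), (forall y, y \in s -> S y.2) /\ x = \sum_(y <- s) y.1 *: y.2.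

End VOA.

(* Main.v *)
Require Import Defs.
From HB Require Import structures.
From mathcomp Require Import all_boot all_algebra.
From mathcomp Require Import reals Rstruct.
From mathcomp.real_closed Require Import complex.
From mathcomp Require Import all_order zify ring lra.
From Stdlib Require Import ClassicalEpsilon.
Set Implicit Arguments. Unset Strict Implicit. Unset Printing Implicit Defensive.
Import Order.TTheory GRing.Theory Num.Theory.
Local Open Scope ring_scope.

Lemma tsumE (W : zmodType) (f : nat -> W) (N : nat) :
  (forall M, (N <= M)%N -> f M = 0) -> tsum f = \sum_(i < N) f i.
Proof.
move=> HN; rewrite /tsum; case: excluded_middle_informative => [H|[]]; last by exists N.
case: constructive_indefinite_description => N0 /= H0.
have E : forall A B, (forall M, (A <= M)%N -> f M = 0) -> (A <= B)%N ->
   \sum_(i < B) f i = \sum_(i < A) f i.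
  move=> A B HA AB; rewrite -!(big_mkord xpredT) (@big_cat_nat _ _ _ A) /=; last by []; last by [].
  
  by rewrite [X in _ + X]big1_seq ?addr0 // => j /andP[_]; rewrite mem_index_iota => /andP[+ _]; apply: HA.
case: (leqP N N0) => h; first by rewrite (E N N0).
by rewrite (E N0 N) // ltnW.
Qed.

Section Span.
Variables (K : fieldType) (V : lmodType K).
Implicit Types (S : V -> Prop).

Lemma lspan0 S : lspan S 0.
Proof. by exists [::]; split => //; rewrite big_nil. Qed.

Lemma lspan1 S y : S y -> lspan S y.
Proof. by move=> Sy; exists [:: (1, y)]; split; [move=> z; rewrite inE => /eqP -> | rewrite big_seq1 scale1r]. Qed.

Lemma lspanD S a b : lspan S a -> lspan S b -> lspan S (a + b).
Proof.
move=> [s1 [H1 ->]] [s2 [H2 ->]]; exists (s1 ++ s2); split; last by rewrite big_cat.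
by move=> y; rewrite mem_cat => /orP[/H1|/H2].
Qed.

Lemma lspanZ S k a : lspan S a -> lspan S (k *: a).
Proof.
move=> [s [H ->]]; exists [seq (k * y.1, y.2) | y <- s]; split.
  by move=> y /mapP[z zs ->]; apply: (H _ zs).
by rewrite big_map scaler_sumr; apply: eq_bigr => y _; rewrite scalerA.
Qed.

Lemma lspanN S a : lspan S a -> lspan S (- a).
Proof. by move=> h; rewrite -scaleN1r; apply: lspanZ. Qed.

Lemma lspanB S a b : lspan S a -> lspan S b -> lspan S (a - b).
Proof. by move=> ha hb; apply: lspanD => //; apply: lspanN. Qed.

Lemma lspanMz S a z : lspan S a -> lspan S (a *~ z).
Proof. by move=> h; rewrite -scaler_int; apply: lspanZ. Qed.

Lemma lspan_sum S (I : Type) (r : seq I) (P : pred I) (F : I -> V) :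
  (forall x, P x -> lspan S (F x)) -> lspan S (\sum_(x <- r | P x) F x).
Proof.
move=> h; elim/big_rec: _ => [|x y Px Hy]; first exact: lspan0.
by apply: lspanD => //; apply: h.
Qed.

Lemma lspan_map S S' (f : V -> V) a :
  (forall k x y, f (k *: x + y) = k *: f x + f y) ->
  (forall y, S y -> lspan S' (f y)) -> lspan S a -> lspan S' (f a).
Proof.
move=> lin h [s [H ->]].
have f0 : f 0 = 0.
  have := lin 1 0 0; rewrite scale1r addr0 scale1r => e.
  by apply: (@addrI _ (f 0)); rewrite addr0 -e.
elim: s H => [|y s IH] H; first by rewrite big_nil f0; apply: lspan0.
rewrite big_cons lin; apply: lspanD; last by apply: IH => z zs; apply: H; rewrite inE zs orbT.
by apply: lspanZ; apply: h; apply: H; rewrite inE eqxx.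
Qed.

Lemma lspan_mono S S' a : (forall y, S y -> S' y) -> lspan S a -> lspan S' a.
Proof. by move=> h [s [H ->]]; exists s; split => // y /H /h. Qed.

End Span.


Fixpoint comps (p N : nat) : seq (seq nat) :=
  match p with
  | 0 => if N == 0%N then [:: [::]] else [::]
  | p'.+1 => [seq k0 :: ks | k0 <- iota 0 N.+1, ks <- comps p' (N - k0)]
  end.

Lemma comps_S p N : comps p.+1 N = [seq k0 :: ks | k0 <- iota 0 N.+1, ks <- comps p (N - k0)].
Proof. by []. Qed.

Lemma mem_comps p N ks : (ks \in comps p N) = (size ks == p) && (sumn ks == N).
Proof.
elim: p N ks => [|p IH] N ks.
  case: ks => [|k ks] /=; case: N => //= N; by rewrite ?inE.
rewrite comps_S.
apply/allpairsPdep/andP => [[k0 [ks' [Hk0 Hks ->]]]|[/eqP Hs /eqP Hsum]].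
  move: Hks; rewrite IH => /andP[/eqP Hs /eqP Hsum] /=; rewrite Hs; split => //.
  move: Hk0; rewrite mem_iota => /andP[_ Hk]; apply/eqP; lia.
case: ks Hs Hsum => [|k ks] //= [Hs] Hsum; exists k, ks; split => //.
  by rewrite -[_ :: _]/(iota 0 N.+1) mem_iota; lia.
by rewrite IH Hs eqxx /=; apply/eqP; lia.
Qed.

Lemma uniq_comps p N : uniq (comps p N).
Proof.
elim: p N => [|p IH] N; first by case: N.
rewrite comps_S; apply: (@allpairs_uniq_dep nat (fun _ => seq nat)); first exact: iota_uniq.
  by move=> x _; apply: IH.
by move=> [a b] [c d] _ _ /= [-> ->].
Qed.

Lemma nth_le_sumn (s : seq nat) j : (nth 0%N s j <= sumn s)%N.
Proof. elim: s j => [|x s IH] [|j] //=; first exact: leq_addr. by rewrite (leq_trans (IH j)) // leq_addl. Qed.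

Lemma kat_ord p M (k : {ffun 'I_p -> 'I_M}) (x : 'I_p) : kat k x.+1 = val (k x).
Proof. by rewrite /kat /= valK. Qed.

Lemma sumn_kat p M (k : {ffun 'I_p -> 'I_M}) (idx : seq nat) :
  perm_eq idx (iota 1 p) ->
  sumn [seq kat k a | a <- idx] = (\sum_(x : 'I_p) val (k x))%N.
Proof.
move=> H; rewrite (perm_sumn (perm_map _ H)) (iotaDl 1 0) -map_comp sumnE big_map.
have -> : iota 0 p = index_iota 0 p by rewrite /index_iota subn0.
rewrite big_mkord; apply: eq_bigr => x _ /=.
by rewrite add1n kat_ord.
Qed.

Lemma sum_ffun_comps (W : zmodType) (p N : nat) (idx : seq nat) (F : seq nat -> W) :
  perm_eq idx (iota 1 p) ->
  \sum_(k : {ffun 'I_p -> 'I_N.+1} | (\sum_(x : 'I_p) val (k x) == N)%N)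
      F [seq kat k a | a <- idx]
  = \sum_(ks <- comps p N) F ks.
Proof.
move=> H.
have Hu : uniq idx by rewrite (perm_uniq H) iota_uniq.
have Hmem : forall a, (a \in idx) = (0 < a <= p)%N.
  by move=> a; rewrite (perm_mem H) mem_iota; lia.
set f := fun k : {ffun 'I_p -> 'I_N.+1} => [seq kat k a | a <- idx].
have finj : injective f.
  move=> k1 k2 e; apply/ffunP => x; apply/val_inj.
  have xin : x.+1 \in idx by rewrite Hmem; have := ltn_ord x; lia.
  have := congr1 (fun s => nth 0%N s (index x.+1 idx)) e.
  rewrite /f !(nth_map 0%N) ?index_mem // nth_index // !kat_ord //.
rewrite -big_filter -(big_map f xpredT) /=.
apply: perm_big; apply: uniq_perm.
- by rewrite map_inj_uniq // filter_uniq // index_enum_uniq.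
- exact: uniq_comps.
move=> ks; rewrite mem_comps; apply/mapP/andP => [[k]|[/eqP Hs /eqP Hsum]].
  rewrite mem_filter => /andP[/eqP Hk _] ->; split.
    by rewrite size_map (perm_size H) size_iota.
  by rewrite /f sumn_kat // Hk.
pose k := [ffun x : 'I_p => (inord (nth 0%N ks (index (x : nat).+1 idx)) : 'I_N.+1)].
have fk : f k = ks.
  apply: (@eq_from_nth _ 0%N); first by rewrite size_map (perm_size H) size_iota.
  move=> j; rewrite size_map => jlt.
  rewrite (nth_map 0%N) //.
  have : nth 0%N idx j \in idx by rewrite mem_nth.
  rewrite Hmem => /andP[a0 ap].
  have lt : ((nth 0%N idx j).-1 < p)%N by lia.
  have -> : nth 0%N idx j = (Ordinal lt).+1 by rewrite /=; lia.
  by rewrite kat_ord ffunE /= inordK ?ltnS -?Hsum ?nth_le_sumn // prednK // index_uniq.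
exists k => //; rewrite mem_filter /= mem_index_enum andbT; apply/eqP.
by rewrite -(sumn_kat k H) -/(f k) fk.
Qed.


Lemma tsum_split (W : zmodType) (f g : nat -> W) :
  (exists N, forall M, (N <= M)%N -> f M = 0) ->
  (exists N, forall M, (N <= M)%N -> g M = 0) ->
  tsum f = tsum g + tsum (fun i => f i - g i).
Proof.
move=> [N1 H1] [N2 H2].
have H3 : forall M, (maxn N1 N2 <= M)%N -> f M - g M = 0.
  by move=> M; rewrite geq_max => /andP[a b]; rewrite H1 // H2 // subr0.
rewrite (tsumE (N := maxn N1 N2) H3) (tsumE (N := maxn N1 N2)); last first.
  by move=> M; rewrite geq_max => /andP[a b]; rewrite H1.
rewrite (tsumE (N := maxn N1 N2)); last first.
  by move=> M; rewrite geq_max => /andP[a b]; rewrite H2.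
by rewrite -big_split /=; apply: eq_bigr => j _; rewrite addrC subrK.
Qed.

Lemma tsum_lspan (K : fieldType) (V : lmodType K) (S : V -> Prop) (f : nat -> V) :
  (exists N, forall M, (N <= M)%N -> f M = 0) -> (forall j, lspan S (f j)) ->
  lspan S (tsum f).
Proof. by move=> [N H] h; rewrite (tsumE H); apply: lspan_sum. Qed.

Lemma int_bound (N q : int) : exists M : nat, forall i : nat, (M <= i)%N -> N <= q + i%:Z.
Proof. by exists (absz (N - q)) => i h; lia. Qed.

Lemma sgsq i : ((-1) ^+ i * (-1) ^+ i : int) = 1.
Proof. by rewrite -exprMn mulrNN mulr1 expr1n. Qed.

Lemma Negz_add (N i : nat) : (i <= N)%N -> Negz N + i%:Z = Negz (N - i).
Proof. by move=> h; rewrite !NegzE; lia. Qed.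

Section VOA.
Variables (K : fieldType) (V : lmodType K) (Y : V -> int -> V -> V) (one omega : V) (c : K).
Hypothesis HV : is_VOA Y one omega c.

Lemma Ylin a q : forall k x y, Y a q (k *: x + y) = k *: Y a q x + Y a q y.
Proof. move=> k x y; exact: (Y_linear_r HV k a q x y). Qed.

Lemma Y0 a q : Y a q 0 = 0.
Proof.
have := Ylin a q 1 0 0; rewrite scale1r addr0 scale1r => e.
by apply: (@addrI _ (Y a q 0)); rewrite addr0 -e.
Qed.

Lemma YD a q x y : Y a q (x + y) = Y a q x + Y a q y.
Proof. by have := Ylin a q 1 x y; rewrite !scale1r. Qed.

Lemma YZ a q k x : Y a q (k *: x) = k *: Y a q x.
Proof. by have := Ylin a q k x 0; rewrite !addr0 Y0 addr0. Qed.

Lemma YMz a q x z : Y a q (x *~ z) = Y a q x *~ z.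
Proof. by rewrite -!scaler_int YZ. Qed.

Lemma Ysum a q (I : Type) (r : seq I) (P : pred I) (F : I -> V) :
  Y a q (\sum_(j <- r | P j) F j) = \sum_(j <- r | P j) Y a q (F j).
Proof. by elim/big_rec2: _ => [|j y1 y2 _ <-]; rewrite ?Y0 ?YD. Qed.


Lemma Yfin a x : exists N, forall (q : int) (M : nat), (N <= M)%N -> Y a (q + M%:Z) x = 0.
Proof.
Abort.

Variable u : V.

Definition Wv (ss : seq nat) : V := foldr (fun s w => Y u (- s%:Z) w) one ss.

Fixpoint NPr (ss : seq nat) (N : nat) (x : V) : V :=
  match ss with
  | [::] => if N == 0%N then x else 0
  | s :: ss' => \sum_(k < N.+1)
        Y u (- k%:Z - s%:Z) (NPr ss' (N - k) x) *~ ('C(k + s - 1, s - 1))%:Z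
  end.

Definition NPq (ss : seq nat) (q : int) (x : V) : V :=
  match q with Posz _ => 0 | Negz N => NPr ss N x end.

Lemma nord_cons q qs x :
  nord Y u (q :: qs) x = if q < 0 then Y u q (nord Y u qs x) else nord Y u qs (Y u q x).
Proof. by []. Qed.

Definition NS (p : nat) (x y : V) : Prop := exists qs, size qs = p /\ y = nord Y u qs x.

Lemma NPr_span ss N x : all (fun s => 0 < s)%N ss -> lspan (NS (size ss) x) (NPr ss N x).
Proof.
elim: ss N => [|s ss IH] N /=.
  move=> _; case: eqP => _; last exact: lspan0.
  by apply: lspan1; exists [::].
move=> /andP[s0 Hss]; apply: lspan_sum => k _; apply: lspanMz.
apply: (lspan_map (Ylin _ _)) (IH _ Hss) => y [qs [Hs ->]].
apply: lspan1; exists ((- k%:Z - s%:Z) :: qs); split; first by rewrite /= Hs.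
rewrite nord_cons; have -> : (- k%:Z - s%:Z < 0) = true by lia.
by [].
Qed.

Lemma NPq_span ss q x : all (fun s => 0 < s)%N ss -> lspan (NS (size ss) x) (NPq ss q x).
Proof. by case: q => [n|n] H /=; [apply: lspan0 | apply: NPr_span]. Qed.

Lemma NS_shift p x (j : nat) y : NS p (Y u j%:Z x) y -> gset Y u p.+1 x y.
Proof.
move=> [qs [Hs ->]]; exists (j%:Z :: qs); split; first by rewrite /= Hs.
split; first by apply/hasP; exists j%:Z; rewrite ?inE ?eqxx //.
rewrite nord_cons; have -> : (j%:Z < 0) = false by lia.
by [].
Qed.

Lemma gset_NS p x y : gset Y u p x y -> NS p x y.
Proof. by move=> [qs [Hs [_ ->]]]; exists qs. Qed.

Lemma NPq_ge0 ss z x : 0 <= z -> NPq ss z x = 0.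
Proof. by case: z. Qed.

Lemma YN a q x : Y a q (- x) = - Y a q x.
Proof. by rewrite -scaleN1r YZ scaleN1r. Qed.

Lemma YB a q x y : Y a q (x - y) = Y a q x - Y a q y.
Proof. by rewrite YD YN. Qed.

Lemma fin_B (f g : nat -> V) :
  (exists N, forall M, (N <= M)%N -> f M = 0) ->
  (exists N, forall M, (N <= M)%N -> g M = 0) ->
  (exists N, forall M, (N <= M)%N -> f M - g M = 0).
Proof.
move=> [N1 H1] [N2 H2]; exists (maxn N1 N2) => M.
by rewrite geq_max => /andP[a b]; rewrite H1 // H2 // subr0.
Qed.

Lemma binsym k s : ('C(s + k, k))%:Z = ('C(k + s.+1 - 1, s.+1 - 1))%:Z.
Proof.
have -> : (k + s.+1 - 1 = k + s)%N by lia.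
have -> : (s.+1 - 1 = s)%N by lia.
by rewrite (addnC k s) -(bin_sub (leq_addr k s)) addKn.
Qed.

Lemma main_exp ss : all (fun s => 0 < s)%N ss -> forall q x,
  lspan (gset Y u (size ss) x) (Y (Wv ss) q x - NPq ss q x).
Proof.
elim: ss => [|s ss IH] Hall q x.
  rewrite /= (Y_vacuum HV).
  case: q => [n|N] /=.
    by rewrite subr0; apply: lspan0.
  case: N => [|N] /=.
    by rewrite subrr; apply: lspan0.
  by rewrite subrr; apply: lspan0.
move: Hall => /= /andP[s0 Hall]; case: s s0 => // s' _.
set w := Wv ss.
have Hb := Y_Borcherds HV u w x 0 q (- (s'.+1)%:Z).
rewrite (tsumE (N := 1)) ?big_ord1 /= in Hb; last first.
  by case=> // M _; rewrite /= bin0n mulr0z.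
rewrite addr0 add0r subr0 mulr1z in Hb.
rewrite Hb.
pose cf := fun i : nat => ((-1) ^+ i * ((-1) ^+ i * ('C(s' + i, i))%:Z)).
pose f := fun i : nat => Y u (0 - (s'.+1)%:Z - i%:Z) (Y w (q + i%:Z) x) *~ cf i.
pose f2 := fun i : nat => Y w (q - (s'.+1)%:Z - i%:Z) (Y u (0 + i%:Z) x) *~ (cf i * (-1) ^+ s'.+1).
rewrite -/f -/f2.
pose g := fun i : nat => Y u (0 - (s'.+1)%:Z - i%:Z) (NPq ss (q + i%:Z) x) *~ cf i.
have finf : exists N, forall M, (N <= M)%N -> f M = 0.
  have [N0 HN0] := Y_trunc HV w x; have [M HM] := int_bound N0 q.
  by exists M => j hj; rewrite /f HN0 ?HM // Y0 mul0rz.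
have fing : exists N, forall M, (N <= M)%N -> g M = 0.
  have [M HM] := int_bound 0 q.
  by exists M => j hj; rewrite /g NPq_ge0 ?HM // Y0 mul0rz.
have finf2 : exists N, forall M, (N <= M)%N -> f2 M = 0.
  have [N1 HN1] := Y_trunc HV u x; have [M HM] := int_bound N1 0.
  by exists M => j hj; rewrite /f2 HN1 ?HM // Y0 mul0rz.
have Tg : tsum g = NPq (s'.+1 :: ss) q x.
  rewrite /g; clear fing finf finf2 Hb g f f2.
  case: q => [n|N].
    rewrite (tsumE (N := 0)) ?big_ord0 // => j _.
    by rewrite NPq_ge0 ?Y0 ?mul0rz //; lia.
  rewrite (tsumE (N := N.+1)); last first.
    by move=> j hj; rewrite NPq_ge0 ?Y0 ?mul0rz //; rewrite NegzE; lia.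
  rewrite /=; apply: eq_bigr => k _.
  have kN : (k <= N)%N by rewrite -ltnS.
  rewrite Negz_add //=.
  have -> : 0 - (s'.+1)%:Z - k%:Z = - k%:Z - (s'.+1)%:Z by lia.
  by rewrite /cf mulrA sgsq mul1r binsym.
rewrite (tsum_split finf fing) Tg.
have -> : forall a b d : V, a + b - d - a = b - d.
  by move=> a b d; rewrite addrAC (addrC a b) addrK.
apply: lspanB.
  apply: tsum_lspan; first exact: fin_B.
  move=> j; rewrite /f /g -mulrzBl -YB; apply: lspanMz.
  apply: (lspan_map (Ylin _ _)) (IH Hall _ _) => y [qs [Hs [Hh ->]]].
  apply: lspan1; exists ((0 - (s'.+1)%:Z - j%:Z) :: qs); split; first by rewrite /= Hs.
  split; first by rewrite /= Hh orbT.
  rewrite nord_cons; have -> : (0 - (s'.+1)%:Z - j%:Z < 0) = true by lia.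
  by [].
apply: tsum_lspan => // j; rewrite /f2; apply: lspanMz.
rewrite add0r -(subrK (NPq ss (q - (s'.+1)%:Z - j%:Z) (Y u j x)) (Y w _ _)).
apply: lspanD.
  apply: lspan_mono (IH Hall _ _) => y /gset_NS; exact: NS_shift.
apply: lspan_mono (NPq_span _ _ Hall) => y; exact: NS_shift.
Qed.

End VOA.


Section Blocks.
Variable i : nat -> nat.

Lemma blocksS t : blocks i t.+1 =
  [seq (l + psum i t, t.+1)%N | l <- iota 1 (i t.+1)] ++ blocks i t.
Proof.
rewrite /blocks; have := iotaD 1 t 1; rewrite addn1 add1n => ->.
by rewrite rev_cat.
Qed.

Lemma psumS t : psum i t.+1 = (psum i t + i t.+1)%N.
Proof. by rewrite /psum big_nat_recr. Qed.

Lemma snd_block p t (s : seq nat) : [seq x.2 | x : nat * nat <- [seq (l + p, t)%N | l <- s]] = nseq (size s) t.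
Proof. by elim: s => //= a s ->. Qed.

Lemma fst_block p t (s : seq nat) : [seq x.1 | x : nat * nat <- [seq (l + p, t)%N | l <- s]] = [seq (p + l)%N | l <- s].
Proof. by elim: s => //= a s ->; rewrite addnC. Qed.

Lemma size_blocks t : size (map snd (blocks i t)) = psum i t.
Proof.
elim: t => [|t IH]; first by rewrite /blocks /psum big_geq.
by rewrite blocksS map_cat size_cat IH snd_block size_nseq size_iota psumS addnC.
Qed.

Lemma all_blocks t : all (fun s => 0 < s)%N (map snd (blocks i t)).
Proof.
elim: t => [|t IH] //.
by rewrite blocksS map_cat all_cat IH snd_block andbT; apply/allP => x /nseqP [->].
Qed.

Lemma perm_blocks t : perm_eq (map fst (blocks i t)) (iota 1 (psum i t)).
Proof.
elim: t => [|t IH]; first by rewrite /blocks /psum big_geq.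
rewrite blocksS map_cat fst_block psumS iotaD -iotaDl addnC.
by rewrite perm_catC perm_cat2r.
Qed.

Lemma zip_blocks pt N (k : {ffun 'I_pt -> 'I_N}) (bl : seq (nat * nat)) :
  zip [seq kat k a | a <- map fst bl] (map snd bl) = [seq (kat k x.1, x.2) | x <- bl].
Proof. by elim: bl => //= x bl ->. Qed.

End Blocks.

Section Final.
Variables (K : fieldType) (V : lmodType K) (Y : V -> int -> V -> V) (one omega : V) (c : K).
Hypothesis HV : is_VOA Y one omega c.
Variables (u : V) (i : nat -> nat).

Lemma Wv_cat k s ss : Wv Y one u (nseq k s ++ ss) = iter k (Y u (- s%:Z)) (Wv Y one u ss).
Proof. by elim: k => //= k ->. Qed.

Lemma elt_Wv t : elt Y one u i t = Wv Y one u (map snd (blocks i t)).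
Proof.
elim: t => [|t IH] //=.
by rewrite blocksS map_cat snd_block size_iota Wv_cat IH.
Qed.

Definition Fz (ss : seq nat) (v : V) (ks : seq nat) : V :=
  nord Y u [seq - (x.1)%:Z - (x.2)%:Z | x <- zip ks ss] v
    *~ (\prod_(x <- zip ks ss) 'C(x.1 + x.2 - 1, x.2 - 1))%:Z.

Lemma Pterm_Fz t N (k : {ffun 'I_(psum i t) -> 'I_N}) v :
  Pterm Y u k v = Fz (map snd (blocks i t)) v [seq kat k a | a <- map fst (blocks i t)].
Proof. by rewrite /Pterm /Fz zip_blocks -map_comp big_map. Qed.

Lemma comps_Fz ss N v : all (fun s => 0 < s)%N ss ->
  \sum_(ks <- comps (size ss) N) Fz ss v ks = NPr Y u ss N v.
Proof.
elim: ss N => [|s ss IH] N.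
  by case: N => [|N] _ /=; rewrite ?big_nil // big_seq1 /Fz /= big_nil mulr1z.
case/andP => s0 Hss.
have -> : NPr Y u (s :: ss) N v = \sum_(k < N.+1) Y u (- k%:Z - s%:Z) (NPr Y u ss (N - k) v) *~ ('C(k + s - 1, s - 1))%:Z by [].
rewrite comps_S big_allpairs_dep.
have -> : iota 0 N.+1 = index_iota 0 N.+1 by rewrite /index_iota subn0.
rewrite big_mkord; apply: eq_bigr => k _.
rewrite -(IH (N - k)%N Hss) (Ysum HV) mulrz_suml; apply: eq_bigr => ks _.
rewrite /Fz /= big_cons.
have -> : (- k%:Z - s%:Z < 0) = true by lia.
by rewrite (YMz HV) PoszM -mulrzA_C.
Qed.

End Final.


Lemma isum_support (W : zmodType) (G : int -> W) (lo hi a : int) (L : nat) :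
  lo <= a -> a + L%:Z <= hi + 1 ->
  (forall j, lo <= j -> j <= hi -> (j < a) || (a + L%:Z <= j) -> G j = 0) ->
  isum lo hi G = \sum_(y < L) G (a + y%:Z).
Proof.
move=> h1 h2 hz; rewrite /isum big_mkcond /=.
rewrite -(big_mkord xpredT (fun x => if lo + x%:Z <= hi then G (lo + x%:Z) else 0)).
rewrite (@big_cat_nat _ _ _ (absz (a - lo)%R)) //=; last lia.
rewrite big1_seq ?add0r; last first.
  move=> x /andP[_]; rewrite mem_index_iota => /andP[_ xd].
  case: ifP => // xh; apply: hz => //; lia.
rewrite (@big_cat_nat _ _ _ (absz (a - lo)%R + L)) //=; [|lia|lia].
rewrite [X in _ + X]big1_seq ?addr0; last first.
  move=> x /andP[_]; rewrite mem_index_iota => /andP[xd _].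
  case: ifP => // xh; apply: hz => //; lia.
rewrite -{1}(add0n (absz (a - lo)%R)) big_addn.
have -> : (absz (a - lo)%R + L - absz (a - lo)%R = L)%N by lia.
rewrite big_mkord; apply: eq_bigr => y _.
have yL := ltn_ord y; have -> : (lo + (y + absz (a - lo)%R)%N%:Z <= hi) = true by lia.
congr G; lia.
Qed.

Lemma binomZ_zero (R : nat) (z : int) : (z < 0) || (R%:Z < z) -> binomZ R%:Z z = 0.
Proof. by case: z => [b|b] //= h; rewrite bin_small //; lia. Qed.

Theorem main_gen (K : fieldType) (V : lmodType K) (Y : V -> int -> V -> V) (one omega : V) (c : K)
  (HV : is_VOA Y one omega c)
  (n : nat) (u : V) (wtu : int) (v : V) (t : nat) (i : nat -> nat) :
  exists g : V,
    lspan (gset Y u (psum i t) v) g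
    /\ star Y (elt Y one u i t) (wtr i wtu t) n v
       = mainsum Y u i wtu t n (fun m => - (m%:Z)) n%:Z v + g
    /\ (0 <= n%:Z + wtr i wtu t -> wtr i wtu t < 0 ->
        star Y (elt Y one u i t) (wtr i wtu t) n v
        = mainsum Y u i wtu t n (fun _ => - (n%:Z)) (n%:Z + wtr i wtu t) v + g).
Proof.
have Hall := all_blocks i t; have Hsz := size_blocks i t; have Hperm := perm_blocks i t.
rewrite elt_Wv.
set ss := map snd (blocks i t) in Hall Hsz *.
set r := wtr i wtu t.
have Scomb : forall N, \sum_(k : {ffun 'I_(psum i t) -> 'I_N.+1}
     | (\sum_(x : 'I_(psum i t)) val (k x) == N)%N) Pterm Y u k v = NPr Y u ss N v.
  move=> N; under eq_bigr => k _ do rewrite Pterm_Fz.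
  by rewrite sum_ffun_comps // -Hsz (comps_Fz HV).
pose cm m := ((-1) ^+ m * ('C(m + n, n))%:Z : int).
pose A := \sum_(m < n.+1)
   (\sum_(j < (n + m).+1) NPr Y u ss (n + m - j) v *~ gbinom (r + n%:Z) j) *~ cm m.
have HA : mainsum Y u i wtu t n (fun m => - m%:Z) n%:Z v = A.
  rewrite /mainsum /A; apply: eq_bigr => m _.
  rewrite (@isum_support _ _ _ _ (- m%:Z) (n + m).+1); [|lia|lia|]; last first.
    by move=> j h1 h2 h3; exfalso; lia.
  rewrite mulrz_suml; apply: eq_bigr => y _.
  rewrite Scomb.
  have -> : absz (n%:Z - (- m%:Z + y%:Z))%R = (n + m - y)%N by have := ltn_ord y; lia.
  have -> : - m%:Z + y%:Z + m%:Z = y%:Z by lia.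
  by rewrite /binomZ -mulrzA /cm mulrC (addrC r).
have Hstar : lspan (gset Y u (psum i t) v) (star Y (Wv Y one u ss) r n v - A).
  rewrite /star /A -sumrB; apply: lspan_sum => m _; rewrite -mulrzBl; apply: lspanMz.
  set a := Wv Y one u ss.
  pose f := fun j : nat => Y a (j%:Z - n%:Z - m%:Z - 1) v *~ gbinom (r + n%:Z) j.
  pose g := fun j : nat => NPq Y u ss (j%:Z - n%:Z - m%:Z - 1) v *~ gbinom (r + n%:Z) j.
  have fing : exists N, forall M, (N <= M)%N -> g M = 0.
    by exists (n + m).+1 => M hM; rewrite /g NPq_ge0 ?mul0rz //; lia.
  have finf : exists N, forall M, (N <= M)%N -> f M = 0.
    have [N0 HN0] := Y_trunc HV a v; have [M HM] := int_bound N0 (- n%:Z - m%:Z - 1).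
    by exists M => j hj; rewrite /f HN0 ?mul0rz //; have := HM j hj; lia.
  have -> : \sum_(j < (n + m).+1) NPr Y u ss (n + m - j) v *~ gbinom (r + n%:Z) j = tsum g.
    rewrite (tsumE (N := (n + m).+1)); last first.
      by move=> M hM; rewrite /g NPq_ge0 ?mul0rz //; lia.
    apply: eq_bigr => j _; rewrite /g.
    have -> : j%:Z - n%:Z - m%:Z - 1 = Negz (n + m - j) by rewrite NegzE; have := ltn_ord j; lia.
    by [].
  rewrite (tsum_split finf fing) [tsum g + _]addrC addrK.
  apply: tsum_lspan; first exact: fin_B.
  move=> j; rewrite /f /g -mulrzBl; apply: lspanMz.
  rewrite -Hsz; exact: (main_exp HV u Hall).
exists (star Y (Wv Y one u ss) r n v - A); split => //.
split; first by rewrite HA addrC subrK.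
move=> h1 h2.
suff -> : mainsum Y u i wtu t n (fun _ => - n%:Z) (n%:Z + r) v = A by rewrite addrC subrK.
rewrite -HA /mainsum; apply: eq_bigr => m _.
have mn := ltn_ord m.
pose R := absz (n%:Z + r)%R.
have RE : n%:Z + r = R%:Z by rewrite /R; lia.
rewrite (@isum_support _ _ _ _ (- m%:Z) (R + m).+1); [|lia|rewrite /R; lia|]; last first.
  move=> j _ _ hj; rewrite RE binomZ_zero ?mulr0 ?mulr0z //; rewrite /R in hj *; lia.
rewrite [RHS](@isum_support _ _ _ _ (- m%:Z) (R + m).+1); [|lia|rewrite /R; lia|]; last first.
  move=> j _ _ hj; rewrite RE binomZ_zero ?mulr0 ?mulr0z //; rewrite /R in hj *; lia.
by [].
Qed.


Unset Implicit Arguments.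

Theorem lemma3p9 (V : lmodType CC) (Y : V -> int -> V -> V) (one omega : V) (c : CC)
  (HV : is_VOA Y one omega c)
  (n : nat) (u : V) (wtu : int) (Hu : homog Y omega wtu u) (v : V)
  (t : nat) (Ht : (0 < t)%N) (i : nat -> nat) :
  exists g : V,
    lspan (gset Y u (psum i t) v) g
    /\ star Y (elt Y one u i t) (wtr i wtu t) n v
       = mainsum Y u i wtu t n (fun m => - (m%:Z)) n%:Z v + g
    /\ (0 <= n%:Z + wtr i wtu t -> wtr i wtu t < 0 ->
        star Y (elt Y one u i t) (wtr i wtu t) n v
        = mainsum Y u i wtu t n (fun _ => - (n%:Z)) (n%:Z + wtr i wtu t) v + g).
Proof. exact: (main_gen HV n u wtu v t i). Qed.
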